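(* Let $\mathcal{X}$ be an input space and $X$ a random input in $\mathcal{X}$. Let $u_1,\dots,u_K$ be fixed probability densities on $[0,1]$ and $\gamma,\rho:\mathcal{X}\to\{1,\dots,K\}$ fixed maps. Let $S\in[0,1]$ and $C\in[0,1]$ be random variables such that conditionally on $X=x$, $S$ has density $u_{\gamma(x)}$, $C$ has density $u_{\rho(x)}$, and $S$ and $C$ are conditionally independent given $X$. Let $Y=\mathbf{1}[C\ge \tfrac12]$. Let $x_1,\dots,x_N$ be i.i.d. copies of $X$, let $I_1,\dots,I_M$ be intervals partitioning $[0,1]$, and fix $m$ with $P(S\in I_m)>0$. Define $$\hat r_m=\frac{\frac1N\sum_{n=1}^N P(S\in I_m\mid X=x_n)\,P(C\ge \tfrac12\mid X=x_n)}{\frac1N\sum_{n=1}^N P(S\in I_m\mid X=x_n)}.$$ Then $\hat r_m$ is a consistent estimator of $\mathbb{E}[Y\mid S\in I_m]$ as $N\to\infty$.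
   Context: This models calibration estimation with uncertain ground-truth labels: instead of binary labels, one observes for each sample a confidence distribution $u_{\rho(x_n)}$ (from a certainty phrase in the ground-truth text), and the latent label is $Y=\mathbf{1}[C\ge 1/2]$ with $C$ drawn from that distribution. Here $P(S\in I_m\mid X=x_n)=\int_{I_m}u_{\gamma(x_n)}(s)\,ds$ and $P(C\ge\tfrac12\mid X=x_n)=\int_{1/2}^1 u_{\rho(x_n)}(c)\,dc$. *)

(* Defs.v *)
From HB Require Import structures.
From mathcomp Require Import all_boot all_order all_algebra.
From mathcomp Require Import all_classical all_reals all_analysis.
Set Implicit Arguments. Unset Strict Implicit. Unset Printing Implicit Defensive.
Import Order.TTheory GRing.Theory Num.Theory.
Import numFieldNormedType.Exports.
Local Open Scope classical_set_scope.
Local Open Scope ring_scope.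

Definition dens_prob (R : realType) (f : R -> R) (B : set R) : R :=
  fine (\int[lebesgue_measure]_(s in B `&` `[0%R, 1%R]) (f s)%:E)%E.

Definition is_density01 (R : realType) (f : R -> R) : Prop :=
  measurable_fun (`[0%R, 1%R] : set R) f /\
  (forall s : R, 0 <= s <= 1 -> 0 <= f s) /\
  (\int[lebesgue_measure]_(s in `[0%R, 1%R]) (f s)%:E = 1)%E.

Definition cexp_event d (Omega : measurableType d) (R : realType)
  (P : probability Omega R) (Y : Omega -> R) (E : set Omega) : R :=
  fine (\int[P]_(w in E) (Y w)%:E)%E / fine (P E).

Definition iid_copies d dT (Omega : measurableType d) (T : measurableType dT)
  (R : realType) (P : probability Omega R) (X : Omega -> T)
  (xs : nat -> Omega -> T) : Prop :=
  (forall n, measurable_fun setT (xs n)) /\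
  (forall n (A : set T), measurable A -> P (xs n @^-1` A) = P (X @^-1` A)) /\
  (forall (J : seq nat) (A : nat -> set T), uniq J ->
     (forall i, measurable (A i)) ->
     P (\bigcap_(i in [set i | i \in J]) (xs i @^-1` A i)) =
     (\big[*%E/1%E]_(i <- J) P (xs i @^-1` A i))%E).

Definition cvg_in_prob d (Omega : measurableType d) (R : realType)
  (P : probability Omega R) (Z : nat -> Omega -> R) (r : R) : Prop :=
  forall eps : R, 0 < eps ->
    (P [set w | eps <= `|Z N w - r|]) @[N --> \oo] --> 0%E.

(* Main.v *)
Require Import Defs.
From HB Require Import structures.
From mathcomp Require Import all_boot all_order all_algebra.
From mathcomp Require Import all_classical all_reals all_analysis.
From mathcomp Require Import ring lra.
Import Order.TTheory GRing.Theory Num.Theory.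
Import numFieldNormedType.Exports.
Local Open Scope classical_set_scope.
Local Open Scope ring_scope.


Lemma meas_fin_sum d (Omega : measurableType d) (R : realType)
  (P : probability Omega R) (I : finType) (F : I -> set Omega) :
  (forall i, measurable (F i)) ->
  (forall i j, i != j -> F i `&` F j = set0) ->
  P (\bigcup_(i in setT) F i) = (\sum_(i : I) P (F i))%E.
Proof.
move=> mF dF.
rewrite measure_fin_bigcup //; last first.
- move=> i j _ _ [w [Fi Fj]]; apply/eqP/negPn/negP => /dF/(congr1 (fun A => A w)).
  by rewrite /= => <-.
- exact: finite_finset.
rewrite (fsbigE (enum I)) ?enum_uniq //.
  by rewrite big_enum_cond /=; apply: eq_bigl => i; rewrite in_setT.
by move=> i _; rewrite mem_enum.
Qed.


Section Alg.
Variables (R : realType) (Q : finType) (p : Q -> R).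
Hypothesis hp0 : forall q, 0 <= p q.
Hypothesis hp1 : \sum_q p q = 1.

Definition piN N (s : {ffun 'I_N -> Q}) := \prod_(n < N) p (s n).
Arguments piN {N}.

Lemma piN_ge0 N s : 0 <= @piN N s.
Proof. by apply: prodr_ge0 => i _; exact: hp0. Qed.

Lemma sum_prod_ffun N (G : 'I_N -> Q -> R) :
  \sum_(s : {ffun 'I_N -> Q}) \prod_(n < N) G n (s n) = \prod_(n < N) \sum_q G n q.
Proof. by rewrite bigA_distr_bigA. Qed.

Lemma pair_term N (g : Q -> R) (n n' : 'I_N) : \sum_q p q * g q = 0 ->
  \sum_(s : {ffun 'I_N -> Q}) piN s * (g (s n) * g (s n')) =
  if n == n' then \sum_q p q * g q ^+ 2 else 0.
Proof.
move=> hg.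
have E : forall s : {ffun 'I_N -> Q}, piN s * (g (s n) * g (s n')) =
  \prod_(k < N) (p (s k) * (if k == n then g (s k) else 1) *
                 (if k == n' then g (s k) else 1)).
  move=> s; rewrite !big_split /= -!big_mkcond /= !big_pred1_eq.
  by rewrite /piN mulrA.
under eq_bigr do rewrite E.
rewrite (@sum_prod_ffun N (fun k q => p q * (if k == n then g q else 1) *
  (if k == n' then g q else 1))) (bigD1 n) //=.
case: (eqVneq n n') => [<-| nn'].
  rewrite eqxx [X in _ * X]big1 ?mulr1; last first.
    move=> k /negPf ->; under eq_bigr do rewrite !mulr1; exact: hp1.
  by apply: eq_bigr => q _; rewrite -mulrA expr2.
rewrite (bigD1 n') /=; last by rewrite eq_sym.
rewrite !eqxx (negPf (_ : n' != n)); last by rewrite eq_sym.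
have h2 : \sum_q p q * 1 * g q = 0 by under eq_bigr do rewrite mulr1; exact: hg.
by rewrite h2 mul0r mulr0.
Qed.

Lemma var_identity N (g : Q -> R) : \sum_q p q * g q = 0 ->
  \sum_(s : {ffun 'I_N -> Q}) piN s * (\sum_(n < N) g (s n)) ^+ 2 =
  N%:R * \sum_q p q * g q ^+ 2.
Proof.
move=> hg.
under eq_bigr do rewrite expr2 big_distrlr /= mulr_sumr.
under eq_bigr do under eq_bigr do rewrite mulr_sumr.
rewrite exchange_big /=.
under eq_bigr do rewrite exchange_big /=.
under eq_bigr do under eq_bigr do rewrite pair_term //.
have H1 : forall i : 'I_N, \sum_(i0 < N) (if i == i0 then \sum_q p q * g q ^+ 2 else 0)
   = \sum_q p q * g q ^+ 2.
  move=> i; rewrite (bigD1 i) //= eqxx [X in _ + X]big1 ?addr0 // => j.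
  by rewrite eq_sym => /negPf ->.
under eq_bigr do rewrite H1.
by rewrite sumr_const card_ord mulr_natl.
Qed.

Lemma cheb N (f : Q -> R) (eps : R) : 0 < eps -> (0 < N)%N ->
  \sum_(s : {ffun 'I_N -> Q} |
          eps <= `|N%:R^-1 * \sum_(n < N) f (s n) - \sum_q p q * f q|) piN s
  <= (\sum_q p q * (f q - \sum_q p q * f q) ^+ 2) / (N%:R * eps ^+ 2).
Proof.
move=> he hN.
set mu := \sum_q p q * f q.
set g := fun q => f q - mu.
have hg : \sum_q p q * g q = 0.
  rewrite /g; under eq_bigr do rewrite mulrBr.
  by rewrite sumrB -mulr_suml hp1 mul1r subrr.
have hN0 : (N%:R : R) != 0 by rewrite pnatr_eq0 -lt0n.
have key : forall s : {ffun 'I_N -> Q},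
    N%:R^-1 * \sum_(n < N) f (s n) - mu = N%:R^-1 * \sum_(n < N) g (s n).
  move=> s; rewrite /g sumrB sumr_const card_ord mulrBr.
  by congr (_ - _); rewrite -[mu *+ N]mulr_natl mulrA mulVf // mul1r.
apply: (le_trans (y := \sum_(s : {ffun 'I_N -> Q}) piN s *
          ((N%:R^-1 * \sum_(n < N) g (s n)) ^+ 2 / eps ^+ 2))).
  apply: (le_trans (y := \sum_(s : {ffun 'I_N -> Q} |
          eps <= `|N%:R^-1 * \sum_(n < N) f (s n) - mu|) piN s *
          ((N%:R^-1 * \sum_(n < N) g (s n)) ^+ 2 / eps ^+ 2))).
    apply: ler_sum => s hs.
    rewrite -{1}(mulr1 (piN s)); apply: ler_wpM2l; first exact: piN_ge0.
    rewrite ler_pdivlMr ?exprn_gt0 // mul1r -key.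
    rewrite -[X in _ <= X]real_normK ?num_real //.
    move: hs; set z := `|_|; move=> hs; nra.
  rewrite [X in _ <= X](bigID (fun s : {ffun 'I_N -> Q} =>
          eps <= `|N%:R^-1 * \sum_(n < N) f (s n) - mu|)) /= lerDl.
  apply: sumr_ge0 => s _; apply: mulr_ge0; first exact: piN_ge0.
  by apply: divr_ge0; apply: sqr_ge0.
have -> : \sum_(s : {ffun 'I_N -> Q}) piN s * ((N%:R^-1 * \sum_(n < N) g (s n)) ^+ 2 / eps ^+ 2)
   = (N%:R^-1) ^+ 2 / eps ^+ 2 * \sum_(s : {ffun 'I_N -> Q}) piN s * (\sum_(n < N) g (s n)) ^+ 2.
  rewrite mulr_sumr; apply: eq_bigr => s _; rewrite exprMn; ring.
rewrite var_identity //.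
have he2 : eps ^+ 2 != 0 by rewrite expf_neq0 // gt_eqF.
rewrite le_eqVlt; apply/orP; left; apply/eqP; rewrite /g; field.
by rewrite gt_eqF // hN0.
Qed.

Lemma ratio_close (a b x y eps : R) : 0 < b -> 0 < eps ->
  `|x - a| < eps * b ^+ 2 / (2 * (b + `|a|) + 2 * eps * b) ->
  `|y - b| < eps * b ^+ 2 / (2 * (b + `|a|) + 2 * eps * b) ->
  `|x / y - a / b| < eps.
Proof.
move=> hb he.
set dl := eps * b ^+ 2 / _.
set A := `|a|.
have hA : 0 <= A by exact: normr_ge0.
have hden : 0 < 2 * (b + A) + 2 * eps * b.
  have : 0 < eps * b by exact: mulr_gt0.
  lra.
have hdl : dl * (2 * (b + A) + 2 * eps * b) = eps * b ^+ 2.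
  by rewrite /dl mulrVK // unitfE gt_eqF.
have hdl0 : 0 < dl by rewrite /dl divr_gt0 // mulr_gt0 // exprn_gt0.
move=> hx hy.
have hy' := hy; rewrite ltr_norml in hy'; case/andP: hy' => hy1 hy2.
have hyb : 0 < y.
  have : dl * 2 * eps * b <= eps * b ^+ 2.
    rewrite -hdl; have : 0 <= dl * (2 * (b + A)) by apply: mulr_ge0; lra.
    nra.
  move=> h; have : dl * 2 <= b.
    have heb : 0 < eps * b by exact: mulr_gt0.
    rewrite expr2 in h; nra.
  lra.
have hyn : y != 0 by rewrite gt_eqF.
have hbn : b != 0 by rewrite gt_eqF.
have -> : x / y - a / b = (x * b - a * y) / (y * b) by field; rewrite hyn hbn.
have hyb2 : 0 < y * b by exact: mulr_gt0.
rewrite normrM normfV (gtr0_norm hyb2) ltr_pdivrMr //.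
have h1 : `|x * b - a * y| <= `|x - a| * b + A * `|y - b|.
  have -> : x * b - a * y = (x - a) * b - a * (y - b) by ring.
  by apply: (le_trans (ler_normB _ _)); rewrite !normrM (gtr0_norm hb).
set U := `|x - a| in hx h1; set V := `|y - b| in hy h1.
have hV0 : 0 <= V by exact: normr_ge0.
have p1 : 0 < (dl - U) * b by apply: mulr_gt0; lra.
have p2 : 0 <= A * (dl - V) by apply: mulr_ge0; lra.
have p3 : 0 < eps * b * (y - (b - dl)) by apply: mulr_gt0; [exact: mulr_gt0 | lra].
have p4 : 0 <= eps * b ^+ 2 by apply: mulr_ge0; [exact: ltW | exact: sqr_ge0].
rewrite expr2 in hdl p4.
nra.
Qed.

End Alg.

Lemma sum_split_le (R : realType) (Q : finType) (F : Q -> R) (A B1 B2 : pred Q) :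
  (forall s, 0 <= F s) -> (forall s, A s -> B1 s || B2 s) ->
  \sum_(s | A s) F s <= \sum_(s | B1 s) F s + \sum_(s | B2 s) F s.
Proof.
move=> hF hA; rewrite big_mkcond [X in _ <= X + _]big_mkcond [X in _ <= _ + X]big_mkcond -big_split /=.
apply: ler_sum => s _.
case hAs: (A s); last by apply: addr_ge0; case: ifP.
have := hA s hAs; case: (B1 s); case: (B2 s) => //= _.
- by rewrite lerDl.
- by rewrite addr0.
- by rewrite add0r.
Qed.


Lemma prob_pattern d dT (Omega : measurableType d) (T : measurableType dT)
  (R : realType) (P : probability Omega R) (X : Omega -> T)
  (xs : nat -> Omega -> T) (Q : finType) (cls : T -> Q) :
  measurable_fun setT X ->
  (forall q, measurable (cls @^-1` [set q])) -> iid_copies P X xs ->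
  forall N (pr : pred {ffun 'I_N -> Q}),
  P [set w | pr [ffun n : 'I_N => cls (xs n w)]] =
  (\sum_(s | pr s) \prod_(n < N) fine (P (X @^-1` (cls @^-1` [set s n]))))%:E.
Proof.
move=> mX mcls [mxs [law indep]] N pr.
pose As (s : {ffun 'I_N -> Q}) (i : nat) : set T :=
  if insub i is Some j then cls @^-1` [set s j] else setT.
have mAs : forall s i, measurable (As s i).
  by move=> s i; rewrite /As; case: insub.
pose E s := \bigcap_(i in [set i | i \in iota 0 N]) (xs i @^-1` As s i).
have ES : forall s, E s = [set w | [ffun n : 'I_N => cls (xs n w)] = s].
  move=> s; apply/seteqP; split => w /=.
  - move=> H; apply/ffunP => j; rewrite ffunE.
    have := H (val j); rewrite /As valK /=; apply.
    by rewrite mem_iota /= add0n ltn_ord.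
  - move=> <- i; rewrite /= mem_iota => /andP [_ hi].
    rewrite /As; case: insubP => [j _ hj|] //=.
    by rewrite ffunE hj.
have mE : forall s, measurable (E s).
  move=> s; apply: bigcap_measurableType => k _.
  by rewrite -[_ @^-1` _]setTI; apply: (mxs k) => //; exact: mAs.
have -> : [set w | pr [ffun n : 'I_N => cls (xs n w)]] =
   \bigcup_(s in setT) (if pr s then E s else set0).
  apply/seteqP; split => w /=.
  - move=> H; exists [ffun n : 'I_N => cls (xs n w)] => //.
    by rewrite H ES.
  - move=> [s _]; case: ifP => // hs; rewrite ES /= => ->; exact: hs.
rewrite meas_fin_sum; last first.
- move=> s s' ss'; case: ifP => _; last by rewrite set0I.
  case: ifP => _; last by rewrite setI0.
  rewrite !ES; apply/seteqP; split => w //= [-> h].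
  by move/eqP: ss'.
- by move=> s; case: ifP => _ //.
rewrite -sumEFin [RHS]big_mkcond /=; apply: eq_bigr => s _.
case: ifP => _; last exact: measure0.
rewrite /E indep ?iota_uniq //.
rewrite (_ : iota 0 N = index_iota 0 N); last by rewrite /index_iota subn0.
rewrite big_mkord -prodEFin; apply: eq_bigr => i _.
rewrite law // /As valK fineK //.
apply: fin_num_measure.
by rewrite -[X @^-1` _]setTI; apply: mX.
Qed.


Theorem mainTheorem2
  (R : realType) (d : measure_display) (Omega : measurableType d)
  (P : probability Omega R)
  (dT : measure_display) (T : measurableType dT)
  (K : nat) (u : 'I_K -> R -> R) (gamma rho : T -> 'I_K)
  (X : Omega -> T) (S C : Omega -> R)
  (M : nat) (I : 'I_M -> set R) (m : 'I_M)
  (xs : nat -> Omega -> T) :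
  (forall k, is_density01 (u k)) ->
  (forall k, measurable (gamma @^-1` [set k])) ->
  (forall k, measurable (rho @^-1` [set k])) ->
  measurable_fun setT X -> measurable_fun setT S -> measurable_fun setT C ->
  (forall (A : set T) (B D : set R), measurable A -> measurable B -> measurable D ->
     P (X @^-1` A `&` S @^-1` B `&` C @^-1` D) =
     (\int[P]_(w in X @^-1` A)
        (dens_prob (u (gamma (X w))) B * dens_prob (u (rho (X w))) D)%:E)%E) ->
  (forall k, exists i : interval R, I k = [set` i]) ->
  (forall k1 k2, k1 != k2 -> I k1 `&` I k2 = set0) ->
  \bigcup_(k in setT) I k = `[0%R, 1%R]%classic ->
  (0 < P (S @^-1` I m))%E ->
  iid_copies P X xs ->
  let Y := fun w => if 1 / 2 <= C w then 1 else 0 : R in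
  let pS := fun x => dens_prob (u (gamma x)) (I m) in
  let pC := fun x => dens_prob (u (rho x)) `[1 / 2, 1]%classic in
  let rhat := fun (N : nat) (w : Omega) =>
    ((N%:R)^-1 * \sum_(n < N) pS (xs n w) * pC (xs n w)) /
    ((N%:R)^-1 * \sum_(n < N) pS (xs n w)) in
  cvg_in_prob P rhat (cexp_event P Y (S @^-1` I m)).
Proof.
move=> hu hg hr mX mS mC hcond hIint _ _ hpos hiid Y pS pC rhat.
pose Q := ('I_K * 'I_K)%type.
pose cls := fun x : T => ((gamma x, rho x) : Q).
have mcls : forall q : Q, measurable (cls @^-1` [set q]).
  move=> [q1 q2].
  have -> : cls @^-1` [set (q1, q2)] = gamma @^-1` [set q1] `&` rho @^-1` [set q2].
    apply/seteqP; split => x /=; rewrite /cls.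
      by case=> -> ->.
    by case=> -> ->.
  exact: measurableI.
have mXp : forall A, measurable A -> measurable (X @^-1` A).
  by move=> A mA; rewrite -[X @^-1` A]setTI; apply: mX.
have mSp : forall A, measurable A -> measurable (S @^-1` A).
  by move=> A mA; rewrite -[S @^-1` A]setTI; apply: mS.
have mCp : forall A, measurable A -> measurable (C @^-1` A).
  by move=> A mA; rewrite -[C @^-1` A]setTI; apply: mC.
pose p := fun q : Q => fine (P (X @^-1` (cls @^-1` [set q]))).
have hPp : forall q, P (X @^-1` (cls @^-1` [set q])) = (p q)%:E.
  by move=> q; rewrite fineK //; apply: fin_num_measure; apply: mXp.
have hsplit : forall Z, measurable Z ->
    P Z = (\sum_(q : Q) P (X @^-1` (cls @^-1` [set q]) `&` Z))%E.
  move=> Z mZ; rewrite -meas_fin_sum; last first.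
  - move=> q q' qq'; apply/seteqP; split => w //= [[h1 _] [h2 _]].
    by move/eqP: qq'; rewrite -h1 -h2.
  - by move=> q; apply: measurableI => //; apply: mXp.
  congr (P _); apply/seteqP; split => w /=.
    by move=> hw; exists (cls (X w)).
  by case=> q _ [].
have hp0 : forall q, 0 <= p q.
  by move=> q; apply: fine_ge0; apply: measure_ge0.
have hp1 : \sum_q p q = 1.
  apply: EFin_inj; rewrite -sumEFin -(probability_setT P) (hsplit setT) //.
  by apply: eq_bigr => q _; rewrite setIT hPp.
have dp1 : forall k, dens_prob (u k) setT = 1.
  by move=> k; rewrite /dens_prob setTI; have [_ [_ ->]] := hu k.
have hPSC : forall B D, measurable B -> measurable D ->
    P (S @^-1` B `&` C @^-1` D) =
    (\sum_q p q * (dens_prob (u q.1) B * dens_prob (u q.2) D))%:E.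
  move=> B D mB mD; rewrite hsplit; last by apply: measurableI; [apply: mSp|apply: mCp].
  rewrite -sumEFin; apply: eq_bigr => q _.
  rewrite setIA (hcond _ _ _ (mcls q) mB mD).
  rewrite (eq_integral (cst (dens_prob (u q.1) B * dens_prob (u q.2) D)%:E)); last first.
    by move=> w; rewrite in_setE /= => <-.
  rewrite integral_cst; last exact: mXp.
  rewrite [X in (_ * X)%E](_ : _ = (p q)%:E); last exact: hPp.
  by rewrite -EFinM mulrC.
have mIm : measurable (I m) by have [i ->] := hIint m; exact: measurable_itv.
pose sq := fun q : Q => dens_prob (u q.1) (I m).
pose cq := fun q : Q => dens_prob (u q.2) `[1 / 2, 1]%classic.
pose a := \sum_q p q * (sq q * cq q).
pose b := \sum_q p q * sq q.
have hPb : P (S @^-1` I m) = b%:E.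
  rewrite (_ : S @^-1` I m = S @^-1` I m `&` C @^-1` setT); last by rewrite preimage_setT setIT.
  rewrite hPSC //; congr (_%:E); apply: eq_bigr => q _; by rewrite dp1 mulr1.
have hset : `[1 / 2, +oo[%classic `&` `[0%R, 1%R]%classic = `[1 / 2, 1]%classic `&` `[0%R, 1%R]%classic :> set R.
  apply/seteqP; split => x /=; rewrite !in_itv /=.
    by rewrite andbT => -[-> /andP[-> ->]].
  by rewrite andbT => -[/andP[-> _] ->].
have hPa : (\int[P]_(w in S @^-1` I m) (Y w)%:E)%E = a%:E.
  rewrite (eq_integral (fun w => (\1_(C @^-1` `[1 / 2, +oo[%classic) w)%:E)); last first.
    move=> w _; rewrite indicE /Y.
    case: ifP => h; [rewrite mem_set // | rewrite memNset //].
      by rewrite /= in_itv /= h.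
    by rewrite /= in_itv /= h.
  rewrite integral_indic; [|exact: mSp|apply: mCp; exact: measurable_itv].
  rewrite setIC; etransitivity; first exact: (hPSC _ _ mIm (measurable_itv _)).
  congr (_%:E); apply: eq_bigr => q _.
  by rewrite /dens_prob hset.
have hbpos : 0 < b by rewrite -lte_fin -hPb.
have hrv : cexp_event P Y (S @^-1` I m) = a / b by rewrite /cexp_event hPa hPb.
rewrite /cvg_in_prob hrv => eps heps.
pose dl := eps * b ^+ 2 / (2 * (b + `|a|) + 2 * eps * b).
have hdl : 0 < dl.
  have hA := normr_ge0 a.
  have h1 : 0 < eps * b by exact: mulr_gt0.
  apply: divr_gt0; first by apply: mulr_gt0 => //; exact: exprn_gt0.
  lra.
pose f1 := fun q => sq q * cq q.
pose V1 := \sum_q p q * (f1 q - \sum_q p q * f1 q) ^+ 2.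
pose V2 := \sum_q p q * (sq q - \sum_q p q * sq q) ^+ 2.
pose Rat := fun N (s : {ffun 'I_N -> Q}) =>
  (N%:R^-1 * \sum_(n < N) f1 (s n)) / (N%:R^-1 * \sum_(n < N) sq (s n)).
pose PR := fun N (s : {ffun 'I_N -> Q}) => eps <= `|Rat N s - a / b|.
pose rN := fun N => \sum_(s : {ffun 'I_N -> Q} | PR N s) @piN R Q p N s.
have hPN : forall N, P [set w | eps <= `|rhat N w - a / b|] = (rN N)%:E.
  move=> N.
  have Ew : forall w, Rat N [ffun n : 'I_N => cls (xs n w)] = rhat N w.
    move=> w; rewrite /Rat /rhat; congr ((_ * _) / (_ * _)).
      by apply: eq_bigr => n _; rewrite ffunE.
    by apply: eq_bigr => n _; rewrite ffunE.
  rewrite (_ : [set w | eps <= `|rhat N w - a / b|] =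
               [set w | PR N [ffun n : 'I_N => cls (xs n w)]]); last first.
    by apply/seteqP; split => w /=; rewrite /PR Ew.
  by rewrite (@prob_pattern _ _ _ _ _ P X xs Q cls mX mcls hiid).
have hbound : forall N, (0 < N)%N -> rN N <= (V1 + V2) / (N%:R * dl ^+ 2).
  move=> N hN.
  apply: le_trans.
    apply: (@sum_split_le _ _ (@piN R Q p N) (PR N)
      (fun s => dl <= `|N%:R^-1 * \sum_(n < N) f1 (s n) - \sum_q p q * f1 q|)
      (fun s => dl <= `|N%:R^-1 * \sum_(n < N) sq (s n) - \sum_q p q * sq q|)).
      by move=> s; apply: piN_ge0.
    move=> s hs; case: leP => //= h1; case: leP => //= h2.
    have := @ratio_close R a b _ _ eps hbpos heps h1 h2.
    by rewrite ltNge; move: hs; rewrite /PR /Rat => ->.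
  rewrite mulrDl; apply: lerD.
    exact: (@cheb R Q p hp0 hp1 N f1 dl hdl hN).
  exact: (@cheb R Q p hp0 hp1 N sq dl hdl hN).
have -> : (fun N => P [set w | eps <= `|rhat N w - a / b|]) = (fun N => (rN N)%:E).
  by apply: funext => N; exact: hPN.
apply: cvg_EFin; first by apply: nearW.
have hV : 0 <= V1 + V2.
  by apply: addr_ge0; apply: sumr_ge0 => q _; apply: mulr_ge0 => //; apply: sqr_ge0.
pose W := (V1 + V2) / dl ^+ 2.
have hW : 0 <= W by apply: divr_ge0 => //; apply: sqr_ge0.
apply: (squeeze_cvgr (f := fun _ => 0) (h := fun N => (2 * W) * harmonic N)).
- exists 1%N => // N /= hN.
  apply/andP; split.
    by apply: sumr_ge0 => s _; apply: piN_ge0.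
  apply: (le_trans (hbound N hN)).
  have hn : 1 <= (N%:R : R) by rewrite ler1n.
  have -> : (V1 + V2) / (N%:R * dl ^+ 2) = W * N%:R^-1.
    by rewrite /W; field; rewrite (gt_eqF hdl) andbT; apply/negP => /eqP h; move: hn; rewrite h; lra.
  rewrite /harmonic /=.
  have -> : 2 * W / N.+1%:R = W * (2 / N.+1%:R) by ring.
  apply: ler_wpM2l => //.
  have hn1 : (N.+1%:R : R) = N%:R + 1 by rewrite -natr1.
  rewrite hn1 ler_pdivlMr; last lra.
  rewrite mulrDr mulVf ?mulr1; last by rewrite gt_eqF //; lra.
  have : N%:R^-1 <= (1 : R) by rewrite invf_le1 //; lra.
  lra.
- exact: cvg_cst.
- rewrite -(mulr0 (2 * W)); apply: cvgMl_tmp; exact: cvg_harmonic.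
Qed.
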